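(* Let $h:\Gamma\to\mathbb{T}A$ be a simple parametrized tropical curve with gcd $\delta_\Gamma$. Then $$\sum_{V\in V(\Gamma)}\frac{m_V}{\delta_\Gamma}\equiv 0\pmod 2.$$
   Context: $N$ is an oriented rank $2$ lattice; $\mathbb{T}A=N_\mathbb{R}/\Lambda$ with $\Lambda$ a full-rank lattice in $N_\mathbb{R}$. A parametrized tropical curve $h:\Gamma\to\mathbb{T}A$ is a map from a compact connected finite metric graph, affine on each edge with slope $u_e=w_eu'_e\in N$ ($u'_e$ primitive, $w_e\in\mathbb{Z}_{>0}$ the weight), balanced at each vertex. It is simple if $\Gamma$ is trivalent and $h$ an immersion. Its gcd $\delta_\Gamma$ is the gcd of the weights of its edges. For a trivalent vertex $V$ with outgoing slopes $a_V,b_V,-a_V-b_V$ (weights included), its multiplicity is $m_V=|\det(a_V,b_V)|$. *)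

(* Defs.v *)
From HB Require Import structures.
From mathcomp Require Import all_boot all_order all_algebra.
From mathcomp Require Import reals.
Set Implicit Arguments. Unset Strict Implicit. Unset Printing Implicit Defensive.
Import Order.TTheory GRing.Theory Num.Theory.
Local Open Scope ring_scope.

(* N = Z^2 with its standard orientation; N_R = R^2.  Vectors are pairs. *)
Definition detZ (a b : int * int) : int := a.1 * b.2 - a.2 * b.1.
Definition detR {R : realType} (a b : R * R) : R := a.1 * b.2 - a.2 * b.1.

Definition primitive (u : int * int) : Prop := gcdz u.1 u.2 = 1%N.

Definition in_lattice {R : realType} (lam1 lam2 : R * R) (x : R * R) : Prop :=
  exists m n : int, x = (m%:~R * lam1.1 + n%:~R * lam2.1,
                         m%:~R * lam1.2 + n%:~R * lam2.2).

(* A parametrized tropical curve h : Gamma -> TA = R^2 / Lambda.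
   Gamma: finite graph, vertex set [vert], edges [edge], each edge oriented
   from [src e] to [tgt e] (multi-edges and loops allowed), edge lengths
   [len e] > 0.  h is given by lifts [pos v] in R^2 of the images of the
   vertices; on edge e it is the affine map t |-> pos (src e) + t * u_e
   (t in [0, len e]) mod Lambda, which must close up: pos (tgt e) -
   pos (src e) - len e * u_e in Lambda.  The slope is u_e = wt e * dir e
   with dir e primitive and wt e > 0. *)
Record ptcurve (R : realType) (lam1 lam2 : R * R) := PTCurve {
  vert : finType;
  edge : finType;
  src : edge -> vert;
  tgt : edge -> vert;
  len : edge -> R;
  wt : edge -> nat;
  dir : edge -> int * int;
  pos : vert -> R * R;
  len_pos : forall e, 0 < len e;
  wt_pos : forall e, (0 < wt e)%N;
  dir_prim : forall e, primitive (dir e);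
  closing : forall e,
    in_lattice lam1 lam2
      ((pos (tgt e)).1 - (pos (src e)).1 - len e * ((wt e)%:R * (dir e).1)%:~R,
       (pos (tgt e)).2 - (pos (src e)).2 - len e * ((wt e)%:R * (dir e).2)%:~R);
  connected : forall x y : vert,
    connect (fun a b => [exists e, ((src e == a) && (tgt e == b))
                                   || ((src e == b) && (tgt e == a))]) x y
}.

Section Ops.
Variables (R : realType) (lam1 lam2 : R * R) (C : ptcurve lam1 lam2).

Definition slope (e : edge C) : int * int :=
  ((wt e)%:R * (dir e).1, (wt e)%:R * (dir e).2).

(* half-edges (flags): (e, true) is the end of e at src e, (e, false) the
   end at tgt e. *)
Definition hvert (f : edge C * bool) : vert C :=
  if f.2 then src f.1 else tgt f.1.
Definition hslope (f : edge C * bool) : int * int :=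
  if f.2 then slope f.1 else (- (slope f.1).1, - (slope f.1).2).
Definition hdir (f : edge C * bool) : int * int :=
  if f.2 then dir f.1 else (- (dir f.1).1, - (dir f.1).2).

Definition flags_at (v : vert C) : seq (edge C * bool) :=
  enum [pred f : edge C * bool | hvert f == v].

Definition trivalent : Prop := forall v : vert C, size (flags_at v) = 3%N.

Definition balanced : Prop := forall v : vert C,
  \sum_(f <- flags_at v) (hslope f).1 = 0 /\
  \sum_(f <- flags_at v) (hslope f).2 = 0.

(* h immersion: edges have nonzero slope (automatic) and at every vertex the
   outgoing directions of distinct half-edges are distinct. *)
Definition immersion : Prop := forall f g : edge C * bool,
  hvert f = hvert g -> f <> g -> hdir f <> hdir g.

Definition simple : Prop := trivalent /\ immersion.

Definition vmult (v : vert C) : nat :=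
  match flags_at v with
  | f :: g :: _ => `|detZ (hslope f) (hslope g)|%N
  | _ => 0%N
  end.

Definition gcd_weights : nat := \big[gcdn/0%N]_(e : edge C) wt e.

End Ops.

(* Main.v *)
Require Import Defs.
From HB Require Import structures.
From mathcomp Require Import all_boot all_order all_algebra.
From mathcomp Require Import reals.
From mathcomp Require Import ring.
Import Order.TTheory GRing.Theory Num.Theory.

Local Open Scope ring_scope.

Definition Gf (s : int * int) : int := s.1 * (1 + s.2).

Lemma key_vertex (a1 a2 b1 b2 c1 c2 : int) :
  a1 + (b1 + (c1 + 0)) = 0 -> a2 + (b2 + (c2 + 0)) = 0 ->
  (2 %| ((Posz (absz (a1 * b2 - a2 * b1)%R)) - (a1 * (1 + a2) + (b1 * (1 + b2) + (c1 * (1 + c2) + 0))))%R)%Z.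
Proof.
move=> h1 h2.
have e1 : c1 = - (a1 + b1).
  transitivity ((a1 + (b1 + (c1 + 0))) - (a1 + b1)); first ring.
  by rewrite h1 sub0r.
have e2 : c2 = - (a2 + b2).
  transitivity ((a2 + (b2 + (c2 + 0))) - (a2 + b2)); first ring.
  by rewrite h2 sub0r.
subst c1 c2; rewrite abszE.
case: (ltrP (a1 * b2 - a2 * b1) 0) => h.
- rewrite ltr0_norm //; apply/dvdzP.
  exists (- (a2*b1 + a1*a2 + b1*b2) - (a1*b2 - a2*b1)); ring.
- rewrite ger0_norm //; apply/dvdzP.
  exists (- (a2*b1 + a1*a2 + b1*b2)); ring.
Qed.

Section Proof.
Variables (R : realType) (lam1 lam2 : R * R) (C : ptcurve lam1 lam2).
Hypotheses (hbal : balanced C) (htri : trivalent C).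

Lemma vertex_par (v : vert C) :
  (2 %| (Posz (vmult v) - \sum_(f <- flags_at v) Gf (hslope f))%R)%Z.
Proof.
have sz := htri v; have [b1 b2] := hbal v.
move: sz b1 b2; rewrite /vmult.
case: (flags_at v) => [|f [|g [|h [|]]]] //= _.
rewrite !big_cons !big_nil /Gf /detZ => b1 b2.
exact: key_vertex.
Qed.

Lemma sum_flags :
  \sum_(v : vert C) \sum_(f <- flags_at v) Gf (hslope f) =
  \sum_(f : edge C * bool) Gf (hslope f).
Proof.
rewrite (partition_big (@hvert _ _ _ C) predT) //=.
apply: eq_bigr => v _; rewrite /flags_at big_enum /=.
by apply: eq_bigl => f; rewrite inE.
Qed.

Lemma sum_flags_even : (2 %| (\sum_(f : edge C * bool) Gf (hslope f))%R)%Z.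
Proof.
rewrite -(pair_big predT predT (fun e b => Gf (hslope (e, b)))) /=.
apply: rpred_sum => e _; rewrite big_bool /= /Gf /=.
rewrite /hslope /=.
apply/dvdzP; exists ((slope e).1 * (slope e).2); rewrite /slope /=; ring.
Qed.

Lemma sum_vmult_even : ~~ odd (\sum_(v : vert C) vmult v)%N.
Proof.
have H : (2 %| Posz (\sum_(v : vert C) vmult v)%N)%Z.
  rewrite (big_morph Posz PoszD (erefl _)).
  have -> : \sum_(v : vert C) Posz (vmult v) =
    \sum_(v : vert C) (Posz (vmult v) - \sum_(f <- flags_at v) Gf (hslope f))
    + \sum_(v : vert C) \sum_(f <- flags_at v) Gf (hslope f).
    by rewrite -big_split /=; apply: eq_bigr => v _; rewrite subrK.
  apply: rpredD; first by apply: rpred_sum => v _; exact: vertex_par.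
  by rewrite sum_flags; exact: sum_flags_even.
by move: H; rewrite dvdzE /= dvdn2.
Qed.

Lemma gcd_dvd_slope (f : edge C * bool) :
  ((Posz (gcd_weights C)) %| (hslope f).1)%Z /\ ((Posz (gcd_weights C)) %| (hslope f).2)%Z.
Proof.
have hw : (gcd_weights C %| wt f.1)%N by apply: (biggcdn_inf f.1).
have hw' : ((Posz (gcd_weights C)) %| (wt f.1)%:R)%Z by rewrite natz dvdzE.
case: f hw hw' => e [] /= _ hw; rewrite /slope /=; split;
  rewrite ?rpredN; exact: dvdz_mulr.
Qed.

Lemma gcd2_dvd_vmult (v : vert C) :
  (gcd_weights C * gcd_weights C %| vmult v)%N.
Proof.
rewrite /vmult; case: (flags_at v) => [|f [|g l]] //.
have [f1 f2] := gcd_dvd_slope f; have [g1 g2] := gcd_dvd_slope g.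
have : Defs.detZ (hslope f) (hslope g) \in dvdz (Posz (gcd_weights C * gcd_weights C)%N).
  rewrite PoszM /Defs.detZ; apply: rpredB.
    exact: (dvdz_mul f1 g2).
  exact: (dvdz_mul f2 g1).
by rewrite dvdzE.
Qed.

End Proof.

Theorem mainTheorem8 (R : realType) (lam1 lam2 : R * R)
  (hLam : detR lam1 lam2 != 0%R)
  (C : ptcurve lam1 lam2)
  (hbal : balanced C) (hsimple : simple C) :
  ~~ odd (\sum_(v : vert C) (vmult v %/ gcd_weights C))%N.
Proof.
have htri := hsimple.1.
set d := gcd_weights C.
have hd : forall v : vert C, (d * d %| vmult v)%N.
  by move=> v; exact: (@gcd2_dvd_vmult _ _ _ C v).
case: (posnP d) => [d0|dpos].
  by rewrite big1 // => v _; rewrite d0 divn0.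
case: (boolP (odd d)) => dodd.
- have hs : (\sum_(v : vert C) vmult v = d * \sum_(v : vert C) (vmult v %/ d))%N.
    rewrite big_distrr /=; apply: eq_bigr => v _.
    rewrite mulnC divnK //; exact: dvdn_trans (dvdn_mull _ (dvdnn d)) (hd v).
  have := @sum_vmult_even _ _ _ C hbal htri; rewrite hs oddM dodd /=; exact.
- apply: (big_ind (fun n => ~~ odd n)) => //.
    by move=> x y hx hy; rewrite oddD (negbTE hx) (negbTE hy).
  move=> v _; have [k ->] := dvdnP (hd v).
  by rewrite mulnA mulnK // oddM (negbTE dodd) andbF.
Qed.
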